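(* For every precise separable two-sorted ultrametric space $X$ there is a uniformly continuous dc-embedding $e\colon X\to\overline{\mathbb U}$.
   Context: A two-sorted ultrametric space is $(X,d_X,D_X)$ with $D_X$ a linear order with least element $0$, $d_X\colon X\times X\to D_X$ symmetric, $d_X(x,y)=0\iff x=y$, $d_X(x,z)\le\max\{d_X(x,y),d_X(y,z)\}$; precise if $d_X$ is onto $D_X$. A dc-embedding is an injection on points with an order embedding $D_f$ of distance sets fixing $0$ such that $d(f(x),f(x'))=D_f(d(x,x'))$. The topology and uniformity of $X$ are generated by the open balls $B_r(a)=\{x:d(x,a)<r\}$, $r\in D_X\setminus\{0\}$; separable means having a countable dense subset. $\mathbb U$ is the countable rational Urysohn ultrametric space viewed as a two-sorted space with distance set $\mathbb Q_{\ge0}$, and $\overline{\mathbb U}$ is its Cauchy completion: the Cauchy complete two-sorted ultrametric space with distance set $\mathbb Q_{\ge0}$ containing $\mathbb U$ as a dense isometric subspace (Cauchy complete: every chain of balls containing, for every $r\in D\setminus\{0\}$, a member contained in some ball of radius $r$ has nonempty intersection). *)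

(* Defs.v *)
From Stdlib Require List.
From mathcomp Require Import all_boot all_order all_algebra.
Set Implicit Arguments. Unset Strict Implicit. Unset Printing Implicit Defensive.
Import Order.TTheory GRing.Theory Num.Theory.

Section TwoSorted.
Context {X D : Type} (le : D -> D -> Prop) (z : D) (d : X -> X -> D).

Definition dlt (a b : D) : Prop := le a b /\ a <> b.

Definition linear_order : Prop :=
  [/\ (forall a, le a a),
      (forall a b, le a b -> le b a -> a = b),
      (forall a b c, le a b -> le b c -> le a c)
    & (forall a b, le a b \/ le b a)].

Definition two_sorted_ultrametric : Prop :=
  [/\ linear_order,
      (forall a, le z a),
      (forall x y, d x y = d y x),
      (forall x y, d x y = z <-> x = y)
    & (forall x y w, le (d x w) (d x y) \/ le (d x w) (d y w))].

Definition precise : Prop := forall r : D, exists x y, d x y = r.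

Definition ball (a : X) (r : D) : X -> Prop := fun x => dlt (d x a) r.

(* topology generated by the open balls B_r(a), r in D \ {0}:
   U is open iff every point of U has a basic open neighbourhood inside U,
   basic opens being X itself (empty intersection) or a ball (in an
   ultrametric space finite intersections of balls are balls or empty). *)
Definition is_open (U : X -> Prop) : Prop :=
  forall x, U x ->
    (forall y, U y) \/
    exists a r, r <> z /\ ball a r x /\ (forall y, ball a r y -> U y).

Definition dense (S : X -> Prop) : Prop :=
  forall U, is_open U -> (exists x, U x) -> exists x, U x /\ S x.

Definition countable_set (S : X -> Prop) : Prop :=
  exists f : nat -> option X, forall x, S x <-> exists n, f n = Some x.

Definition separable : Prop :=
  exists S, countable_set S /\ dense S.

Definition entourage (E : X -> X -> Prop) : Prop :=
  exists rs : seq D, (forall r, List.In r rs -> r <> z) /\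
    forall x y, (forall r, List.In r rs -> dlt (d x y) r) -> E x y.

Definition is_ball (B : X -> Prop) : Prop :=
  exists a r, r <> z /\ forall x, B x <-> ball a r x.

Definition chain_of_balls (C : (X -> Prop) -> Prop) : Prop :=
  (forall B, C B -> is_ball B) /\
  (forall B B', C B -> C B' ->
     (forall x, B x -> B' x) \/ (forall x, B' x -> B x)).

Definition cauchy_complete : Prop :=
  forall C, chain_of_balls C ->
    (forall r, r <> z -> exists B, C B /\ exists a, forall x, B x -> ball a r x) ->
    exists x, forall B, C B -> B x.

End TwoSorted.

Section Maps.
Context {X DX Y DY : Type}
  (leX : DX -> DX -> Prop) (zX : DX) (dX : X -> X -> DX)
  (leY : DY -> DY -> Prop) (zY : DY) (dY : Y -> Y -> DY).

Definition dc_embedding (f : X -> Y) (Df : DX -> DY) : Prop :=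
  [/\ (forall x x', f x = f x' -> x = x'),
      (forall a b, leX a b <-> leY (Df a) (Df b)),
      Df zX = zY
    & (forall x x', dY (f x) (f x') = Df (dX x x'))].

Definition uniformly_continuous (f : X -> Y) : Prop :=
  forall E, entourage leY zY dY E ->
    entourage leX zX dX (fun x x' => E (f x) (f x')).

End Maps.

Definition qnn : Type := {q : rat | (0 <= q)%R}.
Definition qle (a b : qnn) : Prop := (sval a <= sval b)%R.
Definition q0 : qnn := exist (fun q : rat => (0 <= q)%R) 0%R (lexx 0%R).

(* The countable rational Urysohn ultrametric space U (as a two-sorted
   space with distance set Q_{>=0}), characterized as the Fraisse limit of
   finite ultrametric spaces with rational distances: a countable
   ultrametric space with Q_{>=0}-valued distances having the one-point
   extension property. *)
Definition rational_urysohn_ultrametric (U : Type) (dU : U -> U -> qnn) : Prop :=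
  [/\ two_sorted_ultrametric qle q0 dU,
      (exists f : nat -> option U, forall x, exists n, f n = Some x)
    & (forall (A : seq U) (q : U -> qnn),
         (forall a, List.In a A -> q a <> q0) ->
         (forall a b, List.In a A -> List.In b A ->
            (qle (dU a b) (q a) \/ qle (dU a b) (q b)) /\
            (qle (q a) (dU a b) \/ qle (q a) (q b))) ->
         exists u, forall a, List.In a A -> dU u a = q a)].

Definition cauchy_completion_of (U : Type) (dU : U -> U -> qnn)
  (Ubar : Type) (dUb : Ubar -> Ubar -> qnn) (iU : U -> Ubar) : Prop :=
  [/\ two_sorted_ultrametric qle q0 dUb,
      cauchy_complete qle q0 dUb,
      (forall x y, dUb (iU x) (iU y) = dU x y)
    & dense qle q0 dUb (fun p => exists x, p = iU x)].

(* Main.v *)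
Require Import Defs.
From mathcomp Require Import all_boot all_order all_algebra.
From mathcomp Require Import lra zify.
From Stdlib Require Import Classical ClassicalEpsilon.
From Stdlib Require List.
Set Implicit Arguments. Unset Strict Implicit. Unset Printing Implicit Defensive.
Import Order.TTheory GRing.Theory Num.Theory.

Section Generic.
Context {X D : Type} (le : D -> D -> Prop) (z : D) (d : X -> X -> D).
Hypothesis H : two_sorted_ultrametric le z d.

Lemma g_refl a : le a a. Proof. case: H => [[r _ _ _]] *; exact: r. Qed.
Lemma g_anti a b : le a b -> le b a -> a = b. Proof. case: H => [[_ an _ _]] *; exact: an. Qed.
Lemma g_trans a b c : le a b -> le b c -> le a c. Proof. case: H => [[_ _ t _]] _ _ _ _ ab bc; exact: t _ _ _ ab bc. Qed.
Lemma g_total a b : le a b \/ le b a. Proof. case: H => [[_ _ _ t]] *; exact: t. Qed.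
Lemma g_z a : le z a. Proof. case: H => _ h *; exact: h. Qed.
Lemma g_sym x y : d x y = d y x. Proof. case: H => _ _ h *; exact: h. Qed.
Lemma g_d0 x y : d x y = z <-> x = y. Proof. case: H => _ _ _ h *; exact: h. Qed.
Lemma g_dxx x : d x x = z. Proof. by apply/g_d0. Qed.
Lemma g_um x y w : le (d x w) (d x y) \/ le (d x w) (d y w). Proof. case: H => _ _ _ _ h; exact: h. Qed.

Lemma dlt_le_trans a b c : dlt le a b -> le b c -> dlt le a c.
Proof.
case=> ab nab bc; split; first exact: g_trans bc.
by move=> E; subst; apply: nab; apply: g_anti.
Qed.
Lemma le_dlt_trans a b c : le a b -> dlt le b c -> dlt le a c.
Proof.
move=> ab [bc nbc]; split; first exact: g_trans bc.
by move=> E; subst; apply: nbc; apply: g_anti.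
Qed.
Lemma dlt_trans a b c : dlt le a b -> dlt le b c -> dlt le a c.
Proof. by move=> ab [bc _]; apply: dlt_le_trans bc. Qed.
Lemma dlt_irr a : ~ dlt le a a. Proof. by case. Qed.
Lemma dlt_nle a b : dlt le a b -> ~ le b a.
Proof. by case=> ab nab ba; apply: nab; apply: g_anti. Qed.
Lemma nle_dlt a b : ~ le a b -> dlt le b a.
Proof.
move=> nab; split; first by case: (g_total a b).
by move=> E; subst; apply: nab; apply: g_refl.
Qed.
Lemma dlt_z a : ~ dlt le a z.
Proof. by move/dlt_nle; apply; apply: g_z. Qed.
Lemma dlt_nz a t : dlt le a t -> t <> z.
Proof. by move=> h E; subst; apply: (dlt_z h). Qed.
Lemma nz_dlt a : a <> z -> dlt le z a.
Proof. by move=> h; split; [apply: g_z | move=> E; apply: h]. Qed.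

Lemma iso a b c : dlt le (d a b) (d b c) -> d a c = d b c.
Proof.
move=> h; apply: g_anti.
  case: (g_um a b c) => // h1; exact: g_trans h1 (proj1 h).
case: (g_um b a c) => // h1.
by exfalso; apply: (dlt_nle h); rewrite (g_sym a b).
Qed.

Lemma ultra_lt x y w t : dlt le (d x y) t -> dlt le (d y w) t -> dlt le (d x w) t.
Proof. by case: (g_um x y w) => h1 h2 h3; [apply: le_dlt_trans h2|apply: le_dlt_trans h3]. Qed.

End Generic.

Section Greedy.
Variables (T : Type) (t0 : T) (good : nat -> (nat -> T) -> T -> Prop).
Hypothesis good_ext : forall n f f' v, (forall i, (i < n)%N -> f i = f' i) ->
  good n f v -> good n f' v.
Hypothesis good_ex : forall n f, (forall k, (k < n)%N -> good k f (f k)) ->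
  exists v, good n f v.

Definition chooseT (P : T -> Prop) : T := epsilon (inhabits t0) P.

Fixpoint pre (n : nat) : nat -> T :=
  match n with
  | 0 => fun _ => t0
  | m.+1 => fun i => if (i < m)%N then pre m i else chooseT (good m (pre m))
  end.

Definition useq (i : nat) : T := pre i.+1 i.

Lemma pre_useq m i : (i < m)%N -> pre m i = useq i.
Proof.
elim: m => // m IH; rewrite ltnS leq_eqVlt => /orP [/eqP -> | lt].
  by rewrite /useq.
by rewrite /= lt IH.
Qed.

Lemma useq_good n : good n useq (useq n).
Proof.
elim/ltn_ind: n => n IH.
have ag : forall i, (i < n)%N -> pre n i = useq i by move=> i; apply: pre_useq.
have gk : forall k, (k < n)%N -> good k (pre n) (pre n k).
  move=> k kn; rewrite ag //; apply: good_ext (IH k kn).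
  by move=> i ik; rewrite ag //; apply: ltn_trans kn.
have [v gv] := good_ex gk.
have : good n (pre n) (useq n).
  rewrite /useq /= ltnn; exact: (epsilon_spec (inhabits t0) (good n (pre n)) (ex_intro _ v gv)).
by apply: good_ext => i /ag.
Qed.

Lemma greedy : exists u : nat -> T, forall n, good n u (u n).
Proof. exists useq; exact: useq_good. Qed.
End Greedy.

Local Open Scope ring_scope.

Lemma lo_ex (f : nat -> rat) (Pl Ph : nat -> Prop) n :
 (forall i, (i < n)%N -> Pl i -> 0 <= f i) ->
 (forall i j, (i < n)%N -> (j < n)%N -> Pl i -> Ph j -> f i < f j) ->
 (forall j, (j < n)%N -> Ph j -> 0 < f j) ->
 exists lo, [/\ 0 <= lo, (forall i, (i < n)%N -> Pl i -> f i <= lo),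
   (forall j, (j < n)%N -> Ph j -> lo < f j) &
   ((forall i, (i < n)%N -> ~ Pl i) -> lo = 0)].
Proof.
move=> h1 h2 h3.
suff [lo [l1 l2 l5]] : exists lo, [/\ 0 <= lo, (forall i, (i < n)%N -> Pl i -> f i <= lo) &
   (lo = 0 \/ exists i, [/\ (i < n)%N, Pl i & lo = f i])].
  exists lo; split=> //.
  - move=> j jn pj; case: l5 => [->|[i [i_n pi ->]]]; [exact: h3 | exact: h2].
  - by move=> hn; case: l5 => // [[i [i_n pi _]]]; exfalso; apply: (hn i).
elim: n h1 h2 h3 => [|n IH] h1 h2 h3.
  by exists 0; split=> //; left.
have [|||lo [l1 l2 l5]] := IH.
- by move=> i i_n; apply: h1; apply: ltnW.
- by move=> i j i_n j_n; apply: h2; apply: ltnW.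
- by move=> i i_n; apply: h3; apply: ltnW.
case: (classic (Pl n)) => pn.
  have fn0 := h1 n (ltnSn n) pn.
  case: (lerP (f n) lo) => fl.
    exists lo; split=> //.
    - move=> i; rewrite ltnS leq_eqVlt => /orP [/eqP -> //|]; exact: l2.
    - case: l5 => [->|[i [i_n pi ->]]]; [by left|right; exists i; split=> //; exact: ltnW].
  exists (f n); split=> //.
  - move=> i; rewrite ltnS leq_eqVlt => /orP [/eqP -> //|] => i_n pi.
    by apply: le_trans (l2 _ i_n pi) (ltW fl).
  - by right; exists n.
exists lo; split=> //.
- move=> i; rewrite ltnS leq_eqVlt => /orP [/eqP -> //|]; exact: l2.
- case: l5 => [->|[i [i_n pi ->]]]; [by left|right; exists i; split=> //; exact: ltnW].
Qed.

Lemma hi_ex (f : nat -> rat) (Ph : nat -> Prop) lo c n : 0 < c ->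
  (forall j, (j < n)%N -> Ph j -> lo < f j) ->
  exists hi, [/\ lo < hi, hi <= lo + c & forall j, (j < n)%N -> Ph j -> hi <= f j].
Proof.
move=> c0; elim: n => [|n IH] h.
  by exists (lo + c); split=> //; lra.
have [|hi [h1 h2 h3]] := IH.
  by move=> j jn; apply: h; apply: ltnW.
case: (classic (Ph n)) => pn.
  exists (Num.min hi (f n)); split.
  - by rewrite lt_min h1 h.
  - by rewrite ge_min h2.
  - move=> j; rewrite ltnS leq_eqVlt => /orP [/eqP -> _|jn pj]; first by rewrite ge_min lexx orbT.
    by rewrite ge_min h3.
exists hi; split=> // j; rewrite ltnS leq_eqVlt => /orP [/eqP -> //|jn pj].
exact: h3.
Qed.

Lemma interval_ex (f : nat -> rat) (Pl Ph : nat -> Prop) n c : 0 < c ->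
 (forall i, (i < n)%N -> Pl i -> 0 <= f i) ->
 (forall i j, (i < n)%N -> (j < n)%N -> Pl i -> Ph j -> f i < f j) ->
 (forall j, (j < n)%N -> Ph j -> 0 < f j) ->
 exists v, [/\ 0 < v, (forall i, (i < n)%N -> Pl i -> f i < v),
   (forall j, (j < n)%N -> Ph j -> v < f j) &
   ((forall i, (i < n)%N -> ~ Pl i) -> v <= c)].
Proof.
move=> c0 h1 h2 h3.
have [lo [l1 l2 l3 l4]] := lo_ex h1 h2 h3.
have [hi [k1 k2 k3]] := hi_ex c0 l3.
exists ((lo + hi) / 2); split.
- lra.
- move=> i i_n pi; have := l2 i i_n pi; lra.
- move=> j jn pj; have := k3 j jn pj; lra.
- by move=> /l4 e; rewrite e in k1 k2 *; lra.
Qed.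

Definition pb (P : nat -> Prop) (n : nat) : bool :=
  if excluded_middle_informative (P n) then true else false.
Lemma pbP P n : pb P n <-> P n.
Proof. by rewrite /pb; case: excluded_middle_informative. Qed.

Lemma least_ex (P : nat -> Prop) : (exists n, P n) ->
  exists n, P n /\ forall m, (m < n)%N -> ~ P m.
Proof.
move=> [n pn]; have ex : exists n, pb P n by exists n; apply/pbP.
have [m pm hm] := find_ex_minn ex.
exists m; split; first by apply/pbP.
move=> k km pk; have := hm k (proj2 (pbP P k) pk); lia.
Qed.

Section DeSec.
Variables (X D : Type) (le : D -> D -> Prop) (z : D) (d : X -> X -> D).
Hypothesis HX : two_sorted_ultrametric le z d.
Variable s : nat -> X.
Hypothesis sdense : forall x t, t <> z -> exists i, dlt le (d x (s i)) t.
Hypothesis prec : precise d.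

Definition pr (n : nat) : nat * nat := odflt (0%N, 0%N) (unpickle n).
Definition dd n := d (s (pr n).1) (s (pr n).2).

Lemma dd_surj a : exists n, dd n = a.
Proof.
have [x [y <-]] := prec a.
have pp : forall i j, dd (pickle (i, j)) = d (s i) (s j).
  by move=> i j; rewrite /dd /pr pickleK.
case: (classic (x = y)) => [<-|nxy].
  by exists (pickle (0, 0)%N); rewrite pp !(g_dxx HX).
have tnz : d x y <> z by move/(g_d0 HX).
have [i hi] := sdense x tnz.
have [j hj] := sdense y tnz.
exists (pickle (i, j)); rewrite pp.
have e1 : d (s i) y = d x y by apply: (iso HX); rewrite (g_sym HX (s i)).
have e2 : d (s j) (s i) = d y (s i).
  by apply: (iso HX); rewrite (g_sym HX (s j)) (g_sym HX y (s i)) e1.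
by rewrite (g_sym HX) e2 (g_sym HX) e1.
Qed.

Record good_g (n : nat) (f : nat -> rat) (v : rat) : Prop := GoodG {
 gg1 : dd n = z -> v = 0;
 gg2 : dd n <> z -> 0 < v;
 gg3 : forall i, (i < n)%N -> dlt le (dd i) (dd n) -> f i < v;
 gg4 : forall i, (i < n)%N -> dlt le (dd n) (dd i) -> v < f i;
 gg5 : forall i, (i < n)%N -> dd i = dd n -> v = f i;
 gg6 : (forall i, (i < n)%N -> dd i <> z -> dlt le (dd n) (dd i)) -> v <= (n.+1%:R)^-1 }.

Lemma good_g_ext n f f' v : (forall i, (i < n)%N -> f i = f' i) -> good_g n f v -> good_g n f' v.
Proof.
move=> ag [h1 h2 h3 h4 h5 h6]; split=> //.
- by move=> i i_n; rewrite -ag //; apply: h3.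
- by move=> i i_n; rewrite -ag //; apply: h4.
- by move=> i i_n; rewrite -ag //; apply: h5.
Qed.

Lemma prior_facts n f : (forall k, (k < n)%N -> good_g k f (f k)) ->
 [/\ (forall i j, (i < n)%N -> (j < n)%N -> dd i = dd j -> f i = f j),
     (forall i j, (i < n)%N -> (j < n)%N -> dlt le (dd i) (dd j) -> f i < f j),
     (forall i, (i < n)%N -> dd i = z -> f i = 0) &
     (forall i, (i < n)%N -> dd i <> z -> 0 < f i)].
Proof.
move=> G; split.
- move=> i j i_n j_n e; case: (ltngtP i j) => [ij|ji|-> //].
    by rewrite (gg5 (G j j_n) ij e).
  by rewrite (gg5 (G i i_n) ji (esym e)).
- move=> i j i_n j_n e; case: (ltngtP i j) => [ij|ji|ij].
  + exact: (gg3 (G j j_n) ij e).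
  + exact: (gg4 (G i i_n) ji e).
  + by subst; case: (dlt_irr e).
- by move=> i i_n; apply: (gg1 (G i i_n)).
- by move=> i i_n; apply: (gg2 (G i i_n)).
Qed.

Lemma good_g_ex n f : (forall k, (k < n)%N -> good_g k f (f k)) -> exists v, good_g n f v.
Proof.
move=> G; have [P1 P2 P3 P4] := prior_facts G.
have c0 : (0 : rat) < (n.+1%:R)^-1 by rewrite invr_gt0 ltr0n.
case: (classic (dd n = z)) => [ez|nz].
  exists 0; split=> //.
  - by move=> i i_n; rewrite ez => h; case: (dlt_z HX h).
  - move=> i i_n; rewrite ez => h; apply: P4 => //; exact: (dlt_nz HX h).
  - by move=> i i_n; rewrite ez => /P3 ->.
  - by move=> _; apply: ltW.
case: (classic (exists i, (i < n)%N /\ dd i = dd n)) => [[i [i_n e]]|nex].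
  exists (f i); split=> //.
  - by move=> _; apply: P4 => //; rewrite e.
  - by move=> j j_n h; apply: P2 => //; rewrite e.
  - by move=> j j_n h; apply: P2 => //; rewrite e.
  - by move=> j j_n h; apply: P1 => //; rewrite e.
  - by move=> h; exfalso; have := h i i_n; rewrite e => /(_ nz); apply: dlt_irr.
have [||| v [v1 v2 v3 v4]] := interval_ex (f := f) (n := n)
   (Pl := fun i => dd i <> z /\ dlt le (dd i) (dd n)) (Ph := fun i => dlt le (dd n) (dd i)) c0.
- by move=> i i_n [h _]; apply: ltW; apply: P4.
- move=> i j i_n j_n [_ h1] h2; apply: P2 => //; exact: (dlt_trans HX h1 h2).
- move=> j j_n h; apply: P4 => //; exact: (dlt_nz HX h).
exists v; split.
- by [].
- by [].
- move=> i i_n h; case: (classic (dd i = z)) => [/(P3 _ i_n) ->|inz] //.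
  by apply: v2.
- by move=> i i_n h; apply: v3.
- by move=> i i_n e; exfalso; apply: nex; exists i.
- move=> h; apply: v4 => i i_n [inz hi].
  by have := dlt_trans HX hi (h i i_n inz); apply: dlt_irr.
Qed.

Lemma g_ex : exists g : nat -> rat, forall n, good_g n g (g n).
Proof. exact: (greedy 0 good_g_ext good_g_ex). Qed.

Lemma rec_claim (a0 : D) : a0 <> z ->
  (forall m, m <> z -> exists a, a <> z /\ dlt le a m) ->
  forall k, exists n, [/\ (k <= n)%N, dd n <> z &
     forall i, (i < n)%N -> dd i <> z -> dlt le (dd n) (dd i)].
Proof.
move=> a0nz nl k.
have [a [anz ha]] : exists a, a <> z /\ forall i, (i < k)%N -> dd i <> z -> dlt le a (dd i).
  elim: k => [|k [a [anz ha]]]; first by exists a0.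
  case: (classic (dd k = z)) => [ek|nk].
    exists a; split=> // i; rewrite ltnS leq_eqVlt => /orP [/eqP -> //|]; exact: ha.
  have [b [bnz [ba bk]]] : exists b, b <> z /\ le b a /\ le b (dd k).
    case: (g_total HX a (dd k)) => h; [exists a | exists (dd k)]; split=> //; split=> //;
      apply: (g_refl HX).
  have [c [cnz cb]] := nl b bnz.
  exists c; split=> // i; rewrite ltnS leq_eqVlt => /orP [/eqP -> _|i_k inz].
    exact: (dlt_le_trans HX cb bk).
  exact: (dlt_trans HX (dlt_le_trans HX cb ba) (ha i i_k inz)).
have [j ej] := dd_surj a.
have exQ : exists n, dd n <> z /\
    forall i, (i < k)%N -> dd i <> z -> dlt le (dd n) (dd i).
  by exists j; rewrite ej.
have [n [[nnz hn] hmin]] := least_ex exQ.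
have kn : (k <= n)%N.
  rewrite leqNgt; apply/negP => nk; have := hn n nk nnz; apply: dlt_irr.
exists n; split=> // i i_n inz.
case: (ltnP i k) => ik; first exact: hn.
have : ~ (dd i <> z /\ forall i', (i' < k)%N -> dd i' <> z -> dlt le (dd i) (dd i')) by apply: hmin.
move=> /not_and_or; case; first by [].
move=> /not_all_ex_not [i' H1].
have [i'k H2] := imply_to_and _ _ H1.
have [i'nz nlt] := imply_to_and _ _ H2.
have := hn i' i'k i'nz => h.
case: (classic (le (dd i') (dd i))) => h2.
  exact: (dlt_le_trans HX h h2).
by exfalso; apply: nlt; apply: (nle_dlt HX).
Qed.

Lemma qnn_eq (a b : qnn) : sval a = sval b -> a = b.
Proof. case: a b => [a pa] [b pb] /= e; subst; f_equal; apply: bool_irrelevance. Qed.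

Lemma De_ex : exists De : D -> qnn,
  [/\ forall a b, le a b <-> qle (De a) (De b), De z = q0 &
      forall r : rat, 0 < r ->
        (exists t, t <> z /\ forall a, dlt le a t -> sval (De a) < r) \/ (forall a, a = z)].
Proof.
have [g G] := g_ex.
have PF : forall i j, [/\ dd i = dd j -> g i = g j, dlt le (dd i) (dd j) -> g i < g j,
     dd i = z -> g i = 0 & dd i <> z -> 0 < g i].
  move=> i j; have [P1 P2 P3 P4] := @prior_facts (maxn i j).+1 g (fun k _ => G k).
  split.
  - by apply: P1; rewrite ltnS ?leq_maxl ?leq_maxr.
  - by apply: P2; rewrite ltnS ?leq_maxl ?leq_maxr.
  - by apply: P3; rewrite ltnS ?leq_maxl ?leq_maxr.
  - by apply: P4; rewrite ltnS ?leq_maxl ?leq_maxr.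
have Gge0 : forall i, 0 <= g i.
  move=> i; case: (classic (dd i = z)) => h.
    by have [_ _ h3 _] := PF i i; rewrite h3.
  by have [_ _ _ h4] := PF i i; apply: ltW; apply: h4.
have ord_g : forall i j, le (dd i) (dd j) <-> g i <= g j.
  move=> i j; split=> h.
    case: (classic (dd i = dd j)) => e.
      by have [h1 _ _ _] := PF i j; rewrite h1.
    by have [_ h2 _ _] := PF i j; apply: ltW; apply: h2; split.
  case: (classic (le (dd i) (dd j))) => // nh.
  have [_ h2 _ _] := PF j i.
  by have := h2 (nle_dlt HX nh); rewrite ltNge h.
pose idx a := epsilon (inhabits 0%N) (fun n => dd n = a).
have idxP : forall a, dd (idx a) = a.
  by move=> a; apply: (epsilon_spec (inhabits 0%N) (fun n => dd n = a)); apply: dd_surj.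
exists (fun a => exist (fun q : rat => 0 <= q) (g (idx a)) (Gge0 (idx a))); split.
- move=> a b; rewrite /qle /=; have := ord_g (idx a) (idx b); by rewrite !idxP.
- by apply: qnn_eq => /=; have [_ _ h3 _] := PF (idx z) (idx z); rewrite h3 ?idxP.
move=> r r0.
case: (classic (forall a, a = z)) => [|/not_all_ex_not [a0 a0nz]]; first by right.
left.
case: (classic (exists m, m <> z /\ forall a, a <> z -> le m a)) => [[m [mnz hm]]|nm].
  exists m; split=> // a ha /=.
  case: (classic (a = z)) => [az|anz].
    by have [_ _ h3 _] := PF (idx a) (idx a); rewrite h3 ?idxP.
  by exfalso; apply: (dlt_nle HX ha); apply: hm.
have nl : forall m, m <> z -> exists a, a <> z /\ dlt le a m.
  move=> m mnz; apply: NNPP => nex; apply: nm; exists m; split=> // a anz.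
  apply: NNPP => nle; apply: nex; exists a; split=> //; exact: (nle_dlt HX nle).
have [n [Nn nnz hn]] := rec_claim a0nz nl (Num.Def.archi_bound r^-1).
exists (dd n); split=> // a ha /=.
have lt1 : g (idx a) < g n by have [_ h _ _] := PF (idx a) n; apply: h; rewrite idxP.
apply: lt_le_trans lt1 _.
apply: le_trans (gg6 (G n) hn) _.
apply: ltW; rewrite invf_plt ?posrE ?ltr0n ?invr_gt0 //.
have r1 : 0 <= r^-1 by rewrite invr_ge0 ltW.
apply: lt_le_trans (archi_boundP r1) _.
by rewrite ler_nat; apply: leq_trans Nn _.
Qed.

End DeSec.

Lemma qlt_iff (a b : qnn) : dlt qle a b <-> sval a < sval b.
Proof.
split.
  case=> h ne; rewrite lt_neqAle h andbT; apply/eqP => e; apply: ne; exact: qnn_eq.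
by move=> h; split; [exact: ltW | move=> e; subst; rewrite ltxx in h].
Qed.

Section Main.
Variables (U : Type) (dU : U -> U -> qnn) (Ubar : Type) (dUb : Ubar -> Ubar -> qnn) (iU : U -> Ubar).
Hypothesis HU : rational_urysohn_ultrametric dU.
Hypothesis HC : cauchy_completion_of dU dUb iU.
Variables (X D : Type) (le : D -> D -> Prop) (z : D) (d : X -> X -> D).
Hypothesis HX : two_sorted_ultrametric le z d.
Variable s : nat -> X.
Hypothesis sdense : forall x t, t <> z -> exists i, dlt le (d x (s i)) t.
Variable De : D -> qnn.
Hypothesis Dord : forall a b, le a b <-> qle (De a) (De b).
Hypothesis Dz : De z = q0.
Hypothesis Dco : forall r : rat, 0 < r ->
        (exists t, t <> z /\ forall a, dlt le a t -> sval (De a) < r) \/ (forall a, a = z).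

Lemma HUm : two_sorted_ultrametric qle q0 dU. Proof. by case: HU. Qed.
Lemma HUext : forall (A : seq U) (q : U -> qnn),
         (forall a, List.In a A -> q a <> q0) ->
         (forall a b, List.In a A -> List.In b A ->
            (qle (dU a b) (q a) \/ qle (dU a b) (q b)) /\
            (qle (q a) (dU a b) \/ qle (q a) (q b))) ->
         exists u, forall a, List.In a A -> dU u a = q a.
Proof. by case: HU. Qed.
Lemma HB : two_sorted_ultrametric qle q0 dUb. Proof. by case: HC. Qed.
Lemma Hcomp : cauchy_complete qle q0 dUb. Proof. by case: HC. Qed.
Lemma Hiso x y : dUb (iU x) (iU y) = dU x y. Proof. by case: HC. Qed.

Lemma De_eq a b : De a = De b -> a = b.
Proof.
move=> e; apply: (g_anti HX); apply/Dord; rewrite e; exact: (g_refl HB).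
Qed.
Lemma De0 a : De a = q0 -> a = z.
Proof. by rewrite -Dz; apply: De_eq. Qed.
Lemma De_lt a b : dlt le a b -> dlt qle (De a) (De b).
Proof. by case=> h ne; split; [apply/Dord | move/De_eq]. Qed.
Lemma De_le a b : le a b -> qle (De a) (De b).
Proof. by move/Dord. Qed.

Definition good_U (n : nat) (f : nat -> U) (v : U) : Prop :=
  forall i, (i < n)%N -> dU v (f i) = De (d (s n) (s i)).

Lemma good_U_ext n f f' v : (forall i, (i < n)%N -> f i = f' i) -> good_U n f v -> good_U n f' v.
Proof. by move=> ag h i i_n; rewrite -ag //; apply: h. Qed.

Lemma good_U_ex n f : (forall k, (k < n)%N -> good_U k f (f k)) -> exists v, good_U n f v.
Proof.
move=> G.
have Fc : forall i j, (i < n)%N -> (j < n)%N -> dU (f i) (f j) = De (d (s i) (s j)).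
  move=> i j i_n j_n; case: (ltngtP i j) => [ij|ji|->].
  - by rewrite (g_sym HUm) (G j j_n i ij) (g_sym HX).
  - exact: G.
  - by rewrite (g_dxx HUm) (g_dxx HX) Dz.
case: (classic (exists i, (i < n)%N /\ s i = s n)) => [[i [i_n e]]|nex].
  by exists (f i) => j j_n; rewrite Fc // e.
pose A := List.map f (List.seq 0 n).
have inA : forall a, List.In a A -> exists i, (i < n)%N /\ f i = a.
  move=> a /List.in_map_iff [i [fi /List.in_seq hi]]; exists i; split=> //; lia.
have Ain : forall i, (i < n)%N -> List.In (f i) A.
  move=> i i_n; apply: List.in_map; apply/List.in_seq; lia.
pose idx a := epsilon (inhabits 0%N) (fun i => (i < n)%N /\ f i = a).
pose q a := De (d (s n) (s (idx a))).
have qf : forall i, (i < n)%N -> q (f i) = De (d (s n) (s i)).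
  move=> i i_n.
  have [j_n e] : (idx (f i) < n)%N /\ f (idx (f i)) = f i.
    by apply: (epsilon_spec (inhabits 0%N) (fun j => (j < n)%N /\ f j = f i)); exists i.
  have : dU (f (idx (f i))) (f i) = q0 by rewrite e (g_dxx HUm).
  by rewrite Fc // => /De0 /(g_d0 HX) ee; rewrite /q ee.
have [||u hu] := HUext (A := A) (q := q).
- move=> a /inA [i [i_n <-]]; rewrite qf // => /De0 /(g_d0 HX) e.
  by apply: nex; exists i.
- move=> a b /inA [i [i_n <-]] /inA [j [j_n <-]]; rewrite !qf // Fc //; split.
  + case: (g_um HX (s i) (s n) (s j)) => h; [left|right]; apply: De_le => //.
    by rewrite (g_sym HX (s n)).
  + case: (g_um HX (s n) (s j) (s i)) => h; [right|left]; apply: De_le => //.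
    by rewrite (g_sym HX (s i) (s j)).
exists u => i i_n; rewrite hu; [exact: qf | exact: Ain].
Qed.


Lemma u_ex : exists u : nat -> U, forall i j, dUb (iU (u i)) (iU (u j)) = De (d (s i) (s j)).
Proof.
have [u0 _] := HUext (A := [::]) (q := fun _ => q0) (fun _ (h : List.In _ [::]) => match h with end)
  (fun _ _ (h : List.In _ [::]) => match h with end).
have [u G] := greedy u0 good_U_ext good_U_ex.
exists u => i j; rewrite Hiso; case: (ltngtP i j) => [ij|ji|->].
- by rewrite (g_sym HUm) (G j i ij) (g_sym HX).
- exact: G.
- by rewrite (g_dxx HUm) (g_dxx HX) Dz.
Qed.

Lemma dUb_lt (p q : Ubar) (t : D) : dUb p q = De t -> forall r : qnn, sval (De t) < sval r -> dlt qle (dUb p q) r.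
Proof. by move=> -> r h; apply/qlt_iff. Qed.

Section WithU.
Variable u : nat -> U.
Hypothesis uP : forall i j, dUb (iU (u i)) (iU (u j)) = De (d (s i) (s j)).
Let phi i := iU (u i).

Lemma Eex x : exists p, forall i, dUb p (phi i) = De (d x (s i)).
Proof.
case: (classic (exists k, x = s k)) => [[k ->]|nS].
  by exists (phi k) => i; apply: uP.
have nz : forall i, d x (s i) <> z.
  by move=> i /(g_d0 HX) e; apply: nS; exists i.
pose C (B : Ubar -> Prop) := exists t i, dlt le (d x (s i)) t /\ B = ball qle dUb (phi i) (De t).
have sub : forall t t' i j, dlt le (d x (s i)) t -> dlt le (d x (s j)) t' -> le t t' ->
    forall y, ball qle dUb (phi i) (De t) y -> ball qle dUb (phi j) (De t') y.
  move=> t t' i j hi hj tt y; rewrite /ball => hy.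
  have h1 : dlt le (d (s i) (s j)) t'.
    apply: (ultra_lt HX (y := x)); last exact: hj.
    by rewrite (g_sym HX); apply: (dlt_le_trans HX hi tt).
  have h2 : dlt qle (dUb (phi i) (phi j)) (De t') by rewrite /phi uP; apply: De_lt.
  apply: (ultra_lt HB (y := phi i)) h2.
  exact: (dlt_le_trans HB hy (De_le tt)).
have [p hp] : exists p, forall B, C B -> B p.
  apply: Hcomp.
    split.
      move=> B [t [i [hi ->]]]; exists (phi i), (De t); split=> //.
      by move/De0 => e; subst; apply: (dlt_z HX hi).
    move=> B B' [t [i [hi ->]]] [t' [j [hj ->]]].
    by case: (g_total HX t t') => h; [left; apply: sub | right; apply: sub].
  move=> r rnz.
  have r0 : 0 < sval r.
    rewrite lt_neqAle; case: r rnz => [r pr] /= rnz; rewrite pr andbT.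
    by apply/eqP => e; apply: rnz; apply: qnn_eq.
  case: (Dco r0) => [[t [tnz ht]]|allz]; last by exfalso; apply: (nz 0%N); apply: allz.
  have [i hi] := sdense x tnz.
  have [j hj] := sdense x (nz i).
  exists (ball qle dUb (phi j) (De (d x (s i)))); split.
    by exists (d x (s i)), j.
  exists (phi j) => y; rewrite /ball => hy.
  apply: (dlt_trans HB hy); apply/qlt_iff; exact: ht.
exists p => i.
have [j hj] := sdense x (nz i).
have Bp : ball qle dUb (phi j) (De (d x (s i))) p by apply: hp; exists (d x (s i)), j.
have e1 : d (s j) (s i) = d x (s i) by apply: (iso HX); rewrite (g_sym HX (s j)).
have e2 : dUb (phi j) (phi i) = De (d x (s i)) by rewrite /phi uP e1.
by rewrite (iso HB (b := phi j)) ?e2 //; rewrite e2; exact: Bp.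
Qed.

End WithU.

Lemma main_sec : exists e : X -> Ubar, dc_embedding le z d qle q0 dUb e De /\
      uniformly_continuous le z d qle q0 dUb e.
Proof.
have [u uP] := u_ex.
pose phi i := iU (u i).
pose e x := epsilon (inhabits (phi 0%N)) (fun p => forall i, dUb p (phi i) = De (d x (s i))).
have eP : forall x i, dUb (e x) (phi i) = De (d x (s i)).
  by move=> x; apply: (epsilon_spec (inhabits (phi 0%N)) (fun p => forall i, dUb p (phi i) = De (d x (s i)))); apply: Eex.
have ed : forall x y, dUb (e x) (e y) = De (d x y).
  move=> x y; case: (classic (x = y)) => [<-|nxy].
    by rewrite (g_dxx HB) (g_dxx HX) Dz.
  have tnz : d x y <> z by move/(g_d0 HX).
  have [i hi] := sdense x tnz.
  have e1 : d y (s i) = d x y.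
    by rewrite (g_sym HX y); apply: (iso HX); rewrite (g_sym HX (s i)).
  have h : dlt qle (dUb (e x) (phi i)) (dUb (phi i) (e y)).
    by rewrite eP (g_sym HB) eP e1; apply: De_lt.
  by rewrite (iso HB h) (g_sym HB) eP e1.
exists e; split.
  split=> //.
  by move=> x x' ee; apply/(g_d0 HX); apply: De0; rewrite -ed ee (g_dxx HB).
move=> E [rs [rsnz hE]].
suff [ts [tsnz hts]] : exists ts : seq D, (forall t, List.In t ts -> t <> z) /\
   forall x y, (forall t, List.In t ts -> dlt le (d x y) t) ->
     forall r, List.In r rs -> dlt qle (dUb (e x) (e y)) r.
  exists ts; split=> // x y h; apply: hE; exact: hts.
elim: rs rsnz {hE} => [|r rs IH] rsnz.
  by exists [::]; split.
have [|ts [tsnz hts]] := IH.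
  by move=> t ht; apply: rsnz; right.
have r0 : 0 < sval r.
  have rnz := rsnz r (or_introl erefl).
  rewrite lt_neqAle; case: r rnz {rsnz} => [r pr] /= rnz; rewrite pr andbT.
  by apply/eqP => ee; apply: rnz; apply: qnn_eq.
case: (Dco r0) => [[t [tnz ht]]|allz].
  exists (t :: ts); split.
    by move=> t' [<-|/tsnz].
  move=> x y h r' [<-|hr'].
    rewrite ed; apply/qlt_iff; apply: ht; apply: h; by left.
  by apply: hts => // t' ht'; apply: h; right.
exists ts; split=> // x y h r' [<-|hr'].
  rewrite ed (allz (d x y)) Dz; apply/qlt_iff => /=; exact: r0.
exact: hts.
Qed.

End Main.

Local Close Scope ring_scope.

Theorem corollary3p22
  (U : Type) (dU : U -> U -> qnn)
  (Ubar : Type) (dUb : Ubar -> Ubar -> qnn) (iU : U -> Ubar) :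
  rational_urysohn_ultrametric dU ->
  cauchy_completion_of dU dUb iU ->
  forall (X D : Type) (le : D -> D -> Prop) (z : D) (d : X -> X -> D),
    two_sorted_ultrametric le z d ->
    precise d ->
    separable le z d ->
    exists (e : X -> Ubar) (De : D -> qnn),
      dc_embedding le z d qle q0 dUb e De /\
      uniformly_continuous le z d qle q0 dUb e.
Proof.
move=> HU HC X D le z d HX prec [S [[f fP] dense]].
case: (classic (inhabited X)) => [[x0]|nX]; last first.
  exists (fun x => False_rect _ (nX (inhabits x))), (fun _ => q0); split.
    split.
    - by move=> x; case: (nX (inhabits x)).
    - by move=> a; case: (prec a) => x _; case: (nX (inhabits x)).
    - by [].
    - by move=> x; case: (nX (inhabits x)).
  move=> E _; exists [::]; split=> // x; case: (nX (inhabits x)).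
pose s n := odflt x0 (f n).
have sdense : forall x t, t <> z -> exists i, dlt le (d x (s i)) t.
  move=> x t tnz.
  have [||y [hy Sy]] := dense (fun y => dlt le (d y x) t).
  - move=> y hy; right; exists x, t; split=> //.
  - exists x; rewrite (g_dxx HX); exact: (nz_dlt HX tnz).
  have [n fn] := proj1 (fP y) Sy.
  by exists n; rewrite /s fn /= (g_sym HX).
have [De [Dord Dz Dco]] := De_ex HX sdense prec.
exists (proj1_sig (constructive_indefinite_description _ (main_sec HU HC HX sdense Dord Dz Dco))), De.
exact: (proj2_sig (constructive_indefinite_description _ (main_sec HU HC HX sdense Dord Dz Dco))).
Qed.
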